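(* The language $\{\,b^{2^m}c^m\mid m\ge1\,\}$ belongs to $\mathscr{L}_{rt}(\mathrm{MC\text{-}OCA}(\log n))$, i.e., it is accepted by a real-time one-way cellular automaton in which, on every accepted input $w$, each pair of neighboring cells communicates $O(\log|w|)$ times.
   Context: A CA is $\langle S,F,A,B,\#,b_l,b_r,\delta\rangle$ with communication functions $b_l,b_r:S\to B\cup\{\bot\}$ ($\bot$: nothing sent) and local transition $\delta:(B\cup\{\#,\bot\})\times S\times(B\cup\{\#,\bot\})\to S$; cells $1..|w|$ start with input letters and update synchronously by $c_{t+1}(i)=\delta(b_r(c_t(i-1)),c_t(i),b_l(c_t(i+1)))$, outer cells receiving $\#$ once at the first step and $\bot$ afterwards. Acceptance: leftmost cell enters an accepting state; real time: within $|w|$ steps. OCA: $b_r\equiv\bot$, leftmost cell gets no boundary symbol. $\mathrm{com}(i,t)$: number of steps $j<t$ with $b_r(c_j(i))\ne\bot$ or $b_l(c_j(i+1))\ne\bot$; $\mathrm{mcom}(w)=\max_{1\le i\le|w|-1}\mathrm{com}(i,t(|w|))$. $\mathrm{MC\text{-}OCA}(f)$: OCAs accepting every accepted $w$ with $\mathrm{mcom}(w)\le g(|w|)$ for some $g\in O(f)$. *)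

(* Defs.v *)
From HB Require Import structures.
From mathcomp Require Import all_boot.

Set Implicit Arguments.
Unset Strict Implicit.
Unset Printing Implicit Defensive.

(* Symbols a cell can receive: a message b in B, the boundary symbol #,
   or bot (nothing sent). *)
Inductive msg (B : Type) : Type := MB of B | MHash | MBot.
Arguments MHash {B}.
Arguments MBot {B}.

(* A CA <S,F,A,B,#,b_l,b_r,delta> over input alphabet Sigma; the inclusion
   A ⊆ S is the injection inp. *)
Record CA (Sigma : finType) := MkCA {
  st : finType;
  com : finType;
  inp : Sigma -> st;
  inp_inj : injective inp;
  acc : pred st;
  bl : st -> option com;              (* b_l, None = bot *)
  br : st -> option com;              (* b_r, None = bot *)
  delta : msg com -> st -> msg com -> st
}.

Arguments st {Sigma} c.
Arguments com {Sigma} c.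
Arguments inp {Sigma} c _.
Arguments acc {Sigma} c _.
Arguments bl {Sigma} c _.
Arguments br {Sigma} c _.
Arguments delta {Sigma} c _ _ _.

Definition of_opt (B : Type) (o : option B) : msg B :=
  if o is Some b then MB b else MBot.

(* Cells are numbered 0 .. n-1 (paper: 1 .. n).  [oca = true] means the
   leftmost cell never receives a boundary symbol. *)
Definition step (Sigma : finType) (M : CA Sigma) (oca : bool) (n t : nat)
    (c : nat -> st M) : nat -> st M :=
  fun i =>
    delta M
      (if i == 0 then (if oca then MBot else if t == 0 then MHash else MBot)
       else of_opt (br M (c i.-1)))
      (c i)
      (if i == n.-1 then (if t == 0 then MHash else MBot)
       else of_opt (bl M (c i.+1))).

Fixpoint conf (Sigma : finType) (M : CA Sigma) (oca : bool) (a : Sigma)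
    (w : seq Sigma) (t : nat) : nat -> st M :=
  match t with
  | 0 => fun i => inp M (nth a (a :: w) i)
  | t'.+1 => @step Sigma M oca (size w).+1 t' (@conf Sigma M oca a w t')
  end.

(* Real-time acceptance: the leftmost cell is in an accepting state at some
   time t <= |w|.  The empty word (no cells) is never accepted. *)
Definition rt_accepts (Sigma : finType) (M : CA Sigma) (oca : bool)
    (w : seq Sigma) : Prop :=
  match w with
  | [::] => False
  | a :: w' => exists t, t <= size w /\ acc M (conf M oca a w' t 0)
  end.

Definition com_count (Sigma : finType) (M : CA Sigma) (oca : bool)
    (a : Sigma) (w : seq Sigma) (i t : nat) : nat :=
  count (fun j => isSome (br M (conf M oca a w j i))
                  || isSome (bl M (conf M oca a w j i.+1))) (iota 0 t).

(* mcom(w) for real time, t(|w|) = |w|: max over the |w|-1 neighbor pairs. *)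
Definition mcom (Sigma : finType) (M : CA Sigma) (oca : bool)
    (w : seq Sigma) : nat :=
  match w with
  | [::] => 0
  | a :: w' => \max_(0 <= i < size w') com_count M oca a w' i (size w)
  end.

Definition is_OCA (Sigma : finType) (M : CA Sigma) : Prop :=
  forall s, br M s = None.

Definition bigO (g f : nat -> nat) : Prop :=
  exists c N, forall n, N <= n -> g n <= c * f n.

Definition in_rt_MC_OCA (Sigma : finType) (f : nat -> nat)
    (L : seq Sigma -> Prop) : Prop :=
  exists M : CA Sigma,
    is_OCA M /\
    (forall w, L w <-> rt_accepts M true w) /\
    exists g, bigO g f /\
      forall w, rt_accepts M true w -> mcom M true w <= g (size w).

(* Alphabet {b, c} encoded as bool: b = true, c = false. *)
Definition Lbc (w : seq bool) : Prop :=
  exists m, 1 <= m /\ w = nseq (2 ^ m) true ++ nseq m false.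

Definition log2 (n : nat) : nat := trunc_log 2 n.

(* Main.v *)
Require Import Defs.
From HB Require Import structures.
From mathcomp Require Import all_boot.
From Stdlib Require Import Lia Classical.
Set Implicit Arguments. Unset Strict Implicit. Unset Printing Implicit Defensive.

Inductive Msg := MS | MB1 | ME of bool & bool.
Definition enc_m (m : Msg) : option (option (bool * bool)) :=
  match m with MS => None | MB1 => Some None | ME b o => Some (Some (b, o)) end.
Definition dec_m (x : option (option (bool * bool))) : Msg :=
  match x with None => MS | Some None => MB1 | Some (Some (b, o)) => ME b o end.
Lemma enc_mK : cancel enc_m dec_m. Proof. by case. Qed.
HB.instance Definition _ := Equality.copy Msg (can_type enc_mK).
HB.instance Definition _ := Choice.copy Msg (can_type enc_mK).
HB.instance Definition _ := Countable.copy Msg (can_type enc_mK).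
HB.instance Definition _ := Finite.copy Msg (can_type enc_mK).

Inductive St := Cinit | Cwait | CE | Dead | Binit | BC of option Msg & bool | BD of Msg & bool.
Definition enc_s (s : St) : ('I_5 + (option Msg * bool) + (Msg * bool))%type :=
  match s with
  | Cinit => inl (inl (@Ordinal 5 0 isT)) | Cwait => inl (inl (@Ordinal 5 1 isT))
  | CE => inl (inl (@Ordinal 5 2 isT)) | Dead => inl (inl (@Ordinal 5 3 isT))
  | Binit => inl (inl (@Ordinal 5 4 isT))
  | BC o c => inl (inr (o, c)) | BD m a => inr (m, a) end.
Definition dec_s (x : ('I_5 + (option Msg * bool) + (Msg * bool))%type) : St :=
  match x with
  | inl (inl i) => match val i with 0 => Cinit | 1 => Cwait | 2 => CE | 3 => Dead | _ => Binit end
  | inl (inr (o, c)) => BC o c | inr (m, a) => BD m a end.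
Lemma enc_sK : cancel enc_s dec_s. Proof. by case. Qed.
HB.instance Definition _ := Equality.copy St (can_type enc_sK).
HB.instance Definition _ := Choice.copy St (can_type enc_sK).
HB.instance Definition _ := Countable.copy St (can_type enc_sK).
HB.instance Definition _ := Finite.copy St (can_type enc_sK).

Definition bit (j s : nat) : bool := odd (j %/ 2 ^ s).
Definition carry (j s : nat) : bool := j %% 2 ^ s == (2 ^ s).-1.

Lemma modS_decomp j s : j %% 2 ^ s.+1 = bit j s * 2 ^ s + j %% 2 ^ s.
Proof.
rewrite /bit.
have H2 : 0 < 2 ^ s by rewrite expn_gt0.
rewrite {1}(divn_eq j (2 ^ s)) {1}(divn_eq (j %/ 2 ^ s) 2).
rewrite mulnDl -mulnA -expnS -addnA modnMDl modn_small.
  by rewrite modn2.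
rewrite expnS mul2n -addnn -addnS; apply: leq_add.
  rewrite modn2; case: (odd _); rewrite ?mul1n ?mul0n //.
by rewrite ltn_mod.
Qed.

Lemma carryS j s : carry j s.+1 = bit j s && carry j s.
Proof.
rewrite /carry modS_decomp.
have H2 : 0 < 2 ^ s by rewrite expn_gt0.
have Hr : j %% 2 ^ s < 2 ^ s by rewrite ltn_mod.
rewrite expnS mul2n -addnn.
case: (bit j s); rewrite ?mul1n ?mul0n /=.
  have -> : (2^s + 2^s).-1 = 2^s + (2^s).-1 by rewrite -!subn1 addnBA.
  by rewrite eqn_add2l.
apply/negbTE; rewrite neq_ltn; apply/orP; left.
apply: (leq_trans Hr). rewrite -subn1 leq_subRL; last first.
  by rewrite addn_gt0 H2.
by rewrite addnC leq_add2l.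
Qed.

Lemma bitS j s : bit j.+1 s = bit j s (+) carry j s.
Proof.
rewrite /bit /carry.
have H2 : 0 < 2 ^ s by rewrite expn_gt0.
have Hr : j %% 2 ^ s < 2 ^ s by rewrite ltn_mod.
rewrite {1}(divn_eq j (2 ^ s)) -addnS divnMDl // oddD.
congr (_ (+) _).
case: (ltngtP (j %% 2 ^ s).+1 (2 ^ s)) => H.
- rewrite divn_small //. apply/esym/negbTE; rewrite neq_ltn; apply/orP; left.
  by rewrite -ltnS prednK.
- by move: H; rewrite ltnS leqNgt Hr.
- rewrite H divnn H2; have -> : (2^s).-1 = j %% 2^s by rewrite -[2^s in LHS]H. by rewrite eqxx.
Qed.

Lemma carry_fin j k : 0 < k ->
  ((2 ^ k <= j) || carry j k = (2 ^ k <= j.+1)) /\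
  (carry j k && ~~ (2 ^ k <= j) = (j.+1 == 2 ^ k)).
Proof.
move=> _; rewrite /carry.
have H2 : 0 < 2 ^ k by rewrite expn_gt0.
case: (leqP (2 ^ k) j) => H /=.
  split; first by rewrite ltnW.
  rewrite andbF; apply/esym/negbTE; rewrite neq_ltn; apply/orP; right. by rewrite ltnS.
rewrite modn_small // andbT.
have E : (j == (2 ^ k).-1) = (j.+1 == 2 ^ k).
  by rewrite -(prednK H2) eqSS.
rewrite E; split => //.
by rewrite eqn_leq H.
Qed.

Definition dl (r : msg Msg) (s : St) : St :=
  match s with
  | Cinit => match r with MHash => CE | MB MS => Cwait | _ => Dead end
  | Cwait => match r with MB (ME _ _) => CE | MBot => Cwait | _ => Dead end
  | CE => Dead
  | Dead => Dead
  | Binit => match r with MBot => Binit | MB MS => BC (Some MS) true | _ => Dead end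
  | BC _ c => match r with
      | MBot => BC (if c then Some MB1 else None) false
      | MB MB1 => BC (if c then None else Some MB1) c
      | MB (ME b ov) => BD (ME (b (+) c) (ov || (b && c))) ((b && c) && ~~ ov)
      | _ => Dead end
  | BD _ _ => Dead
  end.

Definition inpf (x : bool) : St := if x then Binit else Cinit.
Lemma inpf_inj : injective inpf. Proof. by case; case. Qed.
Definition accf (s : St) : bool := if s is BD _ a then a else false.
Definition blf (s : St) : option Msg :=
  match s with
  | Cinit => Some MS | CE => Some (ME false false) | BC o _ => o | BD m _ => Some m
  | _ => None end.
Definition Mach : CA bool :=
  @MkCA bool St Msg inpf inpf_inj accf blf (fun _ => None) (fun l s r => dl r s).

Definition Good (j k t : nat) : option Msg :=
  if t == j then Some MS
  else if (j < t) && (t < j + k) then (if bit j (t - j).-1 then Some MB1 else None)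
  else if t == j + k then Some (ME (bit j k.-1) (2 ^ k <= j))
  else None.

Definition Sb (j k t : nat) : St :=
  if t <= j then Binit
  else if t <= j + k then
    BC (if t == j.+1 then Some MS else if bit j.+1 (t - j.+2) then Some MB1 else None)
       (carry j (t - j.+1))
  else if t == (j + k).+1 then BD (ME (bit j.+1 k.-1) (2 ^ k <= j.+1)) (j.+1 == 2 ^ k)
  else Dead.

Definition Sc (k t : nat) : St :=
  if t == 0 then Cinit else if t <= k then Cwait else if t == k.+1 then CE else Dead.

Lemma stepSc0 t : dl (if t == 0 then MHash else MBot) (Sc 0 t) = Sc 0 t.+1.
Proof. by case: t => [|[|t]]. Qed.

Lemma bit0n s : bit 0 s = false. Proof. by rewrite /bit div0n. Qed.

Lemma stepSc k t : 0 < k -> dl (of_opt (Good 0 k t)) (Sc k t) = Sc k t.+1.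
Proof.
move=> k0; rewrite /Good /Sc add0n bit0n.
case: t => [|t] /=; first by rewrite k0.
case: (ltngtP t.+1 k) => H //.
- by rewrite !eqSS (gtn_eqF H); case: ifP.
- by rewrite H eqxx.
Qed.

Ltac norm_hyps := repeat match goal with
 | H : is_true (_ && _) |- _ => case/andP: H => ? ?
 | H : (_ && _) = false |- _ => move/negbT: H; rewrite negb_and => /orP [] ?
 | H : is_true (~~ _) |- _ => move/negP: H => H
 | H : ~ is_true (_ <= _) |- _ => move/negP/negbT: H; rewrite -ltnNge => H
 | H : is_true (_ <= _) |- _ => move/leP: H => H
 | H : (_ <= _) = false |- _ => move/negbT: H; rewrite -ltnNge => /leP H
 | H : is_true (_ == _) |- _ => move/eqP: H => H
 | H : (_ == _) = false |- _ => move/negbT/eqP: H => H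
 end.
Ltac falia := exfalso; norm_hyps; repeat match goal with H : _ |- _ => revert H end; rewrite -?plusE -?minusE -?multE; intros; lia.

Ltac nlia := norm_hyps; repeat match goal with H : _ |- _ => revert H end;
  rewrite -?plusE -?minusE -?multE; intros;
  first [ lia
        | apply/leP; lia
        | apply/negbTE; rewrite -ltnNge; apply/leP; lia
        | apply/negbTE/eqP; lia
        | apply/eqP; lia ].

Lemma stepSb_hi j k s :
  dl (of_opt (Good j k.+1 (j.+1 + s))) (Sb j k.+1 (j.+1 + s)) = Sb j k.+1 (j.+1 + s).+1.
Proof.
rewrite /Good /Sb.
have e1 : (j.+1 + s == j) = false by nlia.
have e2 : (j < j.+1 + s) = true by nlia.
have e3 : (j.+1 + s <= j) = false by nlia.
have e4 : ((j.+1 + s).+1 <= j) = false by nlia.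
have e5 : (j.+1 + s - j).-1 = s by nlia.
have e6 : j.+1 + s - j.+1 = s by nlia.
have e7 : (j.+1 + s).+1 - j.+2 = s by nlia.
have e8 : (j.+1 + s).+1 - j.+1 = s.+1 by nlia.
have e9 : ((j.+1 + s).+1 == j.+1) = false by nlia.
rewrite e1 e2 e3 e4 e5 e6 e7 e8 e9 /=.
case: (ltngtP s k) => Hs.
- have f1 : (j.+1 + s < j + k.+1) = true by nlia.
  have f2 : (j.+1 + s <= j + k.+1) = true by nlia.
  rewrite f1 f2 /= bitS carryS.
  by case: (bit j s); case: (carry j s).
- have f1 : (j.+1 + s < j + k.+1) = false by nlia.
  have f2 : (j.+1 + s <= j + k.+1) = false by nlia.
  have f4 : (j.+1 + s == j + k.+1) = false by nlia.
  have f5 : ((j.+1 + s).+1 == (j + k.+1).+1) = false by nlia.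
  rewrite f1 f2 f4 f5 /=.
  by case: ifP.
- subst s.
  have f1 : (j.+1 + k < j + k.+1) = false by nlia.
  have f2 : (j.+1 + k <= j + k.+1) = true by nlia.
  have f4 : (j.+1 + k == j + k.+1) = true by nlia.
  have f5 : ((j.+1 + k).+1 == (j + k.+1).+1) = true by nlia.
  rewrite f1 f2 f4 f5 /=.
  have [c1 c2] := carry_fin j (ltn0Sn k).
  rewrite -c1 -c2 carryS bitS.
  by case: (bit j k); case: (carry j k); case: (2 ^ k.+1 <= j).
Qed.

Lemma stepSb j k t : 0 < k -> dl (of_opt (Good j k t)) (Sb j k t) = Sb j k t.+1.
Proof.
case: k => // k _.
case: (leqP t j) => Ht; last first.
  have -> : t = j.+1 + (t - j.+1) by nlia.
  exact: stepSb_hi.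
rewrite /Good /Sb Ht.
case: (ltngtP t j) => H.
- have f1 : (t == j + k.+1) = false by nlia.
  have f2 : (t == j) = false by nlia.
  by rewrite f1.
- by move: H; rewrite ltnNge Ht.
- subst t.
  have f2 : (j.+1 <= j + k.+1) = true by nlia.
  by rewrite f2 eqxx subnn /carry expn0 modn1.
Qed.

Lemma blSb j k t : 0 < k -> blf (Sb j k t) = Good j.+1 k t.
Proof.
case: k => // k _.
rewrite /Sb /Good.
case: (leqP t j) => Ht.
  have f1 : (t == j.+1) = false by nlia.
  have f2 : (j.+1 < t) = false by nlia.
  have f3 : (t == j.+1 + k.+1) = false by nlia.
  by rewrite f1 f2 f3.
have -> : t = j.+1 + (t - j.+1) by nlia.
move: (t - j.+1) => s.
have e3 : (j.+1 + s <= j) = false by nlia.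

case: (ltngtP s k.+1) => Hs.
- have f1 : (j.+1 + s <= j + k.+1) = true by nlia.
  have f2 : (j.+1 + s < j.+1 + k.+1) = true by nlia.
  rewrite f1 f2 andbT /=.
  case: s Hs {f1 f2 e3} => [|s] Hs.
    by rewrite addn0 eqxx.
  have g1 : (j.+1 + s.+1 == j.+1) = false by nlia.
  have g2 : (j.+1 < j.+1 + s.+1) = true by nlia.
  have g3 : j.+1 + s.+1 - j.+2 = s by nlia.
  have g4 : (j.+1 + s.+1 - j.+1).-1 = s by nlia.
  by rewrite g1 g2 g3 g4.
- have f1 : (j.+1 + s <= j + k.+1) = false by nlia.
  have f2 : (j.+1 + s < j.+1 + k.+1) = false by nlia.
  have f3 : (j.+1 + s == (j + k.+1).+1) = false by nlia.
  have f4 : (j.+1 + s == j.+1) = false by nlia.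
  have f5 : (j.+1 + s == j.+1 + k.+1) = false by nlia.
  by rewrite f1 f2 f3 f4 andbF.
- subst s.
  have f1 : (j.+1 + k.+1 <= j + k.+1) = false by nlia.
  have f3 : (j.+1 + k.+1 == (j + k.+1).+1) = true by nlia.
  have f4 : (j.+1 + k.+1 == j.+1) = false by nlia.
  by rewrite f1 f3 f4 ltnn andbF.
Qed.

Lemma accSb j k t : 0 < k -> accf (Sb j k t) = (t == j.+1 + k) && (j.+1 == 2 ^ k).
Proof.
move=> k0; rewrite /Sb.
case: (leqP t j) => Ht.
  have f3 : (t == j.+1 + k) = false by nlia.
  by rewrite f3.
case: (leqP t (j + k)) => Ht2.
  have f3 : (t == j.+1 + k) = false by nlia.
  by rewrite f3.
have -> : (j + k).+1 = j.+1 + k by nlia.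
by case: (t == j.+1 + k).
Qed.

Lemma blSc k t : blf (Sc k t) = Good 0 k.+1 t.
Proof.
rewrite /Sc /Good add0n bit0n.
case: t => [|t] //=.
case: (ltngtP t.+1 k.+1) => H //.
- by rewrite ltnS in H; rewrite H.
- by case: ifP.
- by case: H => ->; rewrite ltnn bit0n leqNgt expn_gt0.
Qed.

Definition Pst (s : St) : bool :=
  match s with CE | BD _ _ => false | BC (Some (ME _ _)) _ => false | _ => true end.
Definition isEH (r : msg Msg) : bool :=
  match r with MHash => true | MB (ME _ _) => true | _ => false end.

Lemma Pst_step s r : Pst s -> ~~ isEH r -> Pst (dl r s).
Proof.
move=> Hs Hr; destruct s as [| | | | |o c|m b]; destruct r as [m1| |]; try destruct m1; try destruct o as [[| |??]|]; try destruct c; simpl in *; try done; by case: ifP.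
Qed.

Lemma Pst_bl s : Pst s -> ~~ isEH (of_opt (blf s)).
Proof. by case: s => //= [[[]|]]. Qed.

Lemma Pst_acc s : Pst s -> accf s = false.
Proof. by case: s. Qed.

Section Run.
Variables (a : bool) (w : seq bool).
Local Notation cf t := (conf Mach true a w t).

Definition In (t i : nat) : msg Msg :=
  if i == size w then (if t == 0 then MHash else MBot) else of_opt (blf (cf t i.+1)).

Lemma confS t i : cf t.+1 i = dl (In t i) (cf t i).
Proof. by []. Qed.

Lemma conf0 i : cf 0 i = inpf (nth a (a :: w) i).
Proof. by []. Qed.

Lemma run_eq i (f : nat -> St) : cf 0 i = f 0 ->
  (forall t, dl (In t i) (f t) = f t.+1) -> forall t, cf t i = f t.
Proof. move=> H0 HS; elim=> [|t IH] //; by rewrite confS IH HS. Qed.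

Definition form (u : seq bool) (j k : nat) := 0 < k /\ u = nseq j true ++ nseq k false.

Lemma drop_last i : i = size w -> drop i (a :: w) = [:: nth a (a :: w) i].
Proof.
move=> ->; rewrite (drop_nth a); last by rewrite /= ltnS.
by rewrite drop_oversize //= .
Qed.

Lemma goodL d : forall i j k, i + d = size w -> form (drop i (a :: w)) j k ->
  forall t, blf (cf t i) = Good j k t /\ accf (cf t i) = (t == j + k) && (j == 2 ^ k).
Proof.
elim: d => [|d IH] i j k Hi [k0 Hd].
  rewrite addn0 in Hi.
  rewrite drop_last // in Hd.
  have Hs := congr1 size Hd; rewrite /= size_cat !size_nseq in Hs.
  have Hj : j = 0 by nlia.
  have Hk : k = 1 by nlia.
  subst j k; case: Hd => Hx.
  have Hr : forall t, cf t i = Sc 0 t.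
    apply: run_eq; first by rewrite conf0 Hx.
    by move=> t; rewrite /In Hi eqxx stepSc0.
  move=> t; rewrite Hr blSc; split => //.
  by case: t => [|[|t]].
have Hlt : i < size w by nlia.
have HIn : forall t, In t i = of_opt (blf (cf t i.+1)).
  by move=> t; rewrite /In (ltn_eqF Hlt).
move: Hd; rewrite (drop_nth a); last by rewrite /= ltnS ltnW.
have Hsz : 0 < size (drop i.+1 (a :: w)) by rewrite size_drop /= subSS subn_gt0.
case: j => [|j] /= Hd.
  case: k k0 Hd Hsz => // k _ [Hx Hrest] Hsz.
  have k0 : 0 < k by move: Hsz; rewrite /= Hrest size_nseq.
  have IH' := IH i.+1 0 k (etrans (addSnnS _ _) Hi) (conj k0 Hrest).
  have Hr : forall t, cf t i = Sc k t.
    apply: run_eq; first by rewrite conf0 Hx.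
    by move=> t; rewrite HIn (proj1 (IH' t)) stepSc.
  move=> t; rewrite Hr blSc; split => //.
  have -> : (0 == 2 ^ k.+1) = false by rewrite eq_sym expn_eq0. rewrite andbF.
  by rewrite /Sc; case: ifP => //; case: ifP => //; case: ifP.
case: Hd => Hx Hrest.
have IH' := IH i.+1 j k (etrans (addSnnS _ _) Hi) (conj k0 Hrest).
have Hr : forall t, cf t i = Sb j k t.
  apply: run_eq; first by rewrite conf0 Hx /Sb leq0n.
  by move=> t; rewrite HIn (proj1 (IH' t)) stepSb.
by move=> t; rewrite Hr blSb // accSb.
Qed.


Lemma badL d : forall i, i + d = size w -> (forall j k, ~ form (drop i (a :: w)) j k) ->
  forall t, Pst (cf t i).
Proof.
elim: d => [|d IH] i Hi Hnf.
  rewrite addn0 in Hi.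
  have Hx : nth a (a :: w) i = true.
    case E : (nth a (a :: w) i) => //.
    by case: (Hnf 0 1); split => //; rewrite drop_last // E.
  have Hr : forall t, cf t i = if t == 0 then Binit else Dead.
    apply: run_eq; first by rewrite conf0 Hx.
    by move=> [|t]; rewrite /In Hi eqxx.
  by move=> t; rewrite Hr; case: ifP.
have Hlt : i < size w by nlia.
have HIn : forall t, In t i = of_opt (blf (cf t i.+1)).
  by move=> t; rewrite /In (ltn_eqF Hlt).
have Hd : drop i (a :: w) = nth a (a :: w) i :: drop i.+1 (a :: w).
  by rewrite (drop_nth a) // /= ltnS ltnW.
have Hi' : i.+1 + d = size w by rewrite addSnnS.
case: (classic (exists j k, form (drop i.+1 (a :: w)) j k)) => [[j [k Hf]]|Hnf'].
  have G := goodL Hi' Hf.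
  case: Hf => k0 Hrest.
  case E : (nth a (a :: w) i).
    by case: (Hnf j.+1 k); split => //; rewrite Hd E Hrest.
  case: j Hrest G => [|j] Hrest G.
    by case: (Hnf 0 k.+1); split => //; rewrite Hd E Hrest.
  have Hr : forall t, cf t i = if t == 0 then Cinit else Dead.
    apply: run_eq; first by rewrite conf0 E.
    move=> [|t]; rewrite HIn (proj1 (G _)) //.
  by move=> t; rewrite Hr; case: ifP.
have IH' : forall t, Pst (cf t i.+1).
  move=> t; apply: (IH _ Hi') => j k Hf; apply: Hnf'; by exists j, k.
elim=> [|t IHt]; first by rewrite conf0; case: (nth _ _ _).
by rewrite confS; apply: Pst_step => //; rewrite HIn; apply: Pst_bl.
Qed.

End Run.

Lemma Good_some j k t : isSome (Good j k t) -> t \in iota j k.+1.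
Proof.
rewrite mem_iota /Good.
case: ifP => [/eqP -> _|_]; first by rewrite leqnn /= addnS ltnS leq_addr.
case: ifP => [/andP [h1 h2] _|_]; first by rewrite ltnW //= addnS ltnS ltnW.
case: ifP => [/eqP -> _|//]. by rewrite leq_addr /= addnS ltnS leqnn.
Qed.

Lemma count_Good j k T : count (fun t => isSome (Good j k t)) (iota 0 T) <= k.+1.
Proof.
rewrite -size_filter -(size_iota j k.+1).
apply: uniq_leq_size; first by apply: filter_uniq; apply: iota_uniq.
by move=> t; rewrite mem_filter => /andP [/Good_some].
Qed.

Lemma suffix_form J m p : 0 < m -> p < J + m ->
  exists j k, form (drop p (nseq J true ++ nseq m false)) j k /\ k <= m.
Proof.
move=> m0 Hp; rewrite drop_cat size_nseq.
case: ifP => H.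
  exists (J - p), m; split => //; split => //. by rewrite drop_nseq.
exists 0, (m - (p - J)); rewrite drop_nseq; split; last by rewrite leq_subr.
split => //. nlia.
Qed.

Theorem mainTheorem9 : in_rt_MC_OCA log2 Lbc.
Proof.
have Hiff : forall W, Lbc W <-> rt_accepts Mach true W.
  case=> [|a w].
    split => // [[m [_ /(congr1 size)]]].
    by rewrite size_cat size_nseq /= => /esym/eqP; rewrite addn_eq0 expn_eq0.
  split.
    case=> m [m0 HW]; rewrite /rt_accepts.
    have Hf : form (drop 0 (a :: w)) (2 ^ m) m by rewrite drop0.
    have G := goodL (d := size w) (i := 0) erefl Hf.
    have Hs : size (a :: w) = 2 ^ m + m by rewrite HW size_cat !size_nseq.
    exists (size (a :: w)); split => //.
    apply: (eq_trans (proj2 (G _))). by rewrite Hs !eqxx.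
  rewrite /rt_accepts => -[t [Ht Hacc]].
  case: (classic (exists j k, form (drop 0 (a :: w)) j k)) => [[j [k Hf]]|Hnf].
    have G := goodL (d := size w) (i := 0) erefl Hf.
    have Hacc2 : accf (conf Mach true a w t 0) by []. rewrite (proj2 (G t)) in Hacc2. move: Hacc2 {Hacc} => Hacc.
    case/andP: Hacc => _ /eqP Hj.
    case: Hf => k0; rewrite drop0 => HW.
    by exists k; split => //; rewrite HW Hj.
  have B := badL (d := size w) (i := 0) erefl.
  have : Pst (conf Mach true a w t 0).
    by apply: B => j k Hf; apply: Hnf; exists j, k.
  by move/Pst_acc; rewrite -[accf _]/(acc Mach _) Hacc.
exists Mach; split; first by [].
split; first exact: Hiff.
exists (fun n => (log2 n).+1); split.
  exists 2, 2 => n Hn.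
  have : 0 < log2 n by rewrite /log2 trunc_log_gt0.
  move=> H; nlia.
case=> [//|a w] /Hiff [m [m0 HW]].
have Hs : size (a :: w) = 2 ^ m + m by rewrite HW size_cat !size_nseq.
have Hlog : m <= log2 (size (a :: w)).
  by rewrite Hs /log2; apply: trunc_log_max => //; rewrite leq_addr.
rewrite /mcom big_seq.
apply: (@leq_trans m.+1); last by rewrite ltnS.
elim/big_ind: _ => //; first by move=> x y; rewrite geq_max => -> ->.
move=> i; rewrite mem_iota add0n => /andP [_ Hi].
rewrite subn0 in Hi. have Hp : i.+1 < 2 ^ m + m by rewrite -Hs /= ltnS.
have [j [k [Hf Hk]]] := suffix_form m0 Hp.
rewrite -HW in Hf.
have Hd : i.+1 + (size w - i.+1) = size w by rewrite subnKC.
have G := goodL Hd Hf.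
rewrite /com_count (@eq_count _ _ (fun t => isSome (Good j k t))); last first.
  by move=> t /=; rewrite (proj1 (G t)).
apply: leq_trans (count_Good _ _ _) _.
by rewrite ltnS.
Qed.
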